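(* Let $d\geq 0$ be an integer. Every $d$-degenerate graph $G$ with $n\geq d$ vertices satisfies $c(G)\leq 2^d(n-d+1)$.
   Context: All graphs are finite, simple and undirected. A graph $G$ is $d$-degenerate if every subgraph of $G$ has a vertex of degree at most $d$. A clique of a graph $G$ is a (possibly empty) set of pairwise adjacent vertices; $c(G)$ denotes the number of cliques of $G$ (including the empty clique, all single vertices and all edges). *)

(* Defs.v *)
From mathcomp Require Import all_boot all_order.
Set Implicit Arguments. Unset Strict Implicit. Unset Printing Implicit Defensive.

Definition simple_graph (T : finType) (e : rel T) : Prop :=
  symmetric e /\ irreflexive e.

Definition degenerate (T : finType) (e : rel T) (d : nat) : Prop :=
  forall (S : {set T}) (f : rel T),
    S != set0 -> (forall x y, f x y -> e x y) ->
    exists2 v, v \in S & #|[set u in S | f v u]| <= d.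

Definition is_clique (T : finType) (e : rel T) (K : {set T}) : bool :=
  [forall x in K, forall y in K, (x != y) ==> e x y].

(* c(G): the number of cliques (including the empty one). *)
Definition num_cliques (T : finType) (e : rel T) : nat :=
  #|[set K : {set T} | is_clique e K]|.

(* Main.v *)
Require Import Defs.
From mathcomp Require Import all_boot all_order.
From mathcomp Require Import zify.

Section S.
Variables (T : finType) (e : rel T).

Definition cl (S : {set T}) := [set K : {set T} | (K \subset S) && is_clique e K].

Lemma cl_pow (S : {set T}) : #|cl S| <= 2 ^ #|S|.
Proof.
rewrite -card_powerset; apply: subset_leq_card; apply/subsetP => K.
by rewrite !inE => /andP[].
Qed.

Lemma cl_step (S : {set T}) (v : T) : v \in S ->
  #|cl S| <= #|cl (S :\ v)| + 2 ^ #|[set u in S | e v u]|.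
Proof.
move=> vS.
rewrite -(cardsID [set K : {set T} | v \in K] (cl S)) addnC.
apply: leq_add.
  apply: subset_leq_card; apply/subsetP => K.
  rewrite !inE => /andP[vK /andP[KS ->]]; rewrite andbT.
  apply/subsetP => x xK; rewrite !inE (subsetP KS) // andbT.
  by apply: contraNneq vK => <-.
rewrite -card_powerset.
set A := _ :&: _.
rewrite -(card_in_imset (f := fun K => K :\ v) (D := A)).
  apply: subset_leq_card; apply/subsetP => _ /imsetP[K KA ->].
  move: KA; rewrite !inE => /andP[/andP[KS Kc] vK].
  apply/subsetP => x; rewrite !inE => /andP[xv xK].
  rewrite (subsetP KS) //=.
  by move/forall_inP: Kc => /(_ v vK) /forall_inP /(_ x xK); rewrite eq_sym xv.
move=> K1 K2; rewrite !inE => /andP[_ v1] /andP[_ v2] E.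
by rewrite -(setD1K v1) -(setD1K v2) E.
Qed.

End S.

Theorem proposition2 (d : nat) (T : finType) (e : rel T) :
  simple_graph e -> degenerate e d -> d <= #|T| ->
  num_cliques e <= 2 ^ d * (#|T| - d + 1).
Proof.
move=> _ Hd.
suff H : forall n (S : {set T}), #|S| = n -> d <= n -> #|@cl T e S| <= 2 ^ d * (n - d + 1).
  move=> dT.
  have -> : num_cliques e = #|@cl T e setT|.
    by apply: eq_card => K; rewrite !inE subsetT.
  by apply: H => //; rewrite cardsT.
elim=> [|n IH] S cS dn.
  have d0 : d = 0 by lia.
  by subst d; move: (@cl_pow T e S); rewrite cS.
case: (eqVneq d n.+1) => [dE|dne].
  by subst d; rewrite subnn muln1; move: (@cl_pow T e S); rewrite cS.
have dn' : d <= n by lia.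
have S0 : S != set0 by apply/eqP => S0; rewrite S0 cards0 in cS.
have [v vS deg] := Hd S e S0 (fun _ _ h => h).
have := @cl_step T e S v vS.
have cS' : #|S :\ v| = n by move: (cardsD1 v S); rewrite vS cS; lia.
have := IH _ cS' dn'.
have : 2 ^ #|[set u in S | e v u]| <= 2 ^ d by rewrite leq_exp2l.
have -> : n.+1 - d + 1 = (n - d + 1).+1 by lia.
rewrite mulnS.
lia.
Qed.
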